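(* Let $\Gamma\le\mathrm{Iso}(\mathbb{R}^{r,s})$ be a subgroup whose centralizer in $\mathrm{Iso}(\mathbb{R}^{r,s})$ has an open orbit in $\mathbb{R}^{r,s}$, and let $\Delta$ be the center of $\Gamma$. Then $U_\Delta\perp U_\Gamma$.
   Context: $\mathbb{R}^{r,s}$ denotes $\mathbb{R}^{n}$, $n=r+s$, with a nondegenerate symmetric bilinear form $\langle\cdot,\cdot\rangle$ of signature $(r,s)$; $\mathrm{Iso}(\mathbb{R}^{r,s})$ is its group of affine isometries, whose elements are written $\gamma=(I+A,v)\colon x\mapsto(I+A)x+v$. For a subset $\Lambda$ of $\Gamma$, $U_\Lambda=\sum_{(I+A,v)\in\Lambda}\operatorname{im}A$. Known facts (Wolf) for such $\Gamma$: every $(I+A,v)\in\Gamma$ satisfies $A^2=0$, $Av=0$, $\langle Ax,y\rangle=-\langle x,Ay\rangle$, $\ker A=(\operatorname{im}A)^\perp$, $\operatorname{im}A$ totally isotropic; for $\gamma_i=(I+A_i,v_i)\in\Gamma$ one has $A_1A_2A_3=0$ and $[\gamma_1,\gamma_2]=(I+2A_1A_2,2A_1v_2)$. *)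

(* Defs.v *)
From Stdlib Require Import Reals.
From mathcomp Require Import all_boot.

Unset Printing Implicit Defensive.
Local Open Scope R_scope.

Definition rvec (n : nat) := 'I_n -> R.
Definition rmat (n : nat) := 'I_n -> 'I_n -> R.

Definition vzero (n : nat) : rvec n := fun _ => 0.
Definition vadd (n : nat) (x y : rvec n) : rvec n := fun i => (x i + y i).
Definition vsub (n : nat) (x y : rvec n) : rvec n := fun i => (x i - y i).
Definition mulmv (n : nat) (M : rmat n) (x : rvec n) : rvec n :=
  fun i => \big[Rplus/0]_(j < n) (M i j * x j).

Definition sgn (r : nat) (i : nat) : R := if (i < r)%N then 1 else (-1).
Definition form (r s : nat) (x y : rvec (r + s)) : R :=
  \big[Rplus/0]_(i < r + s) (sgn r i * x i * y i).

Definition is_isometry (r s : nat) (f : rvec (r + s) -> rvec (r + s)) : Prop :=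
  exists (M : rmat (r + s)) (v : rvec (r + s)),
    (forall x y, form r s (mulmv (r + s) M x) (mulmv (r + s) M y) = form r s x y) /\
    (forall x, f x = vadd (r + s) (mulmv (r + s) M x) v).

(* For gamma = (I + A, v):  A x = (gamma x - gamma 0) - x *)
Definition Apart (r s : nat) (f : rvec (r + s) -> rvec (r + s)) (x : rvec (r + s))
  : rvec (r + s) := vsub (r + s) (vsub (r + s) (f x) (f (vzero (r + s)))) x.

Definition isoset (r s : nat) := (rvec (r + s) -> rvec (r + s)) -> Prop.

Definition is_subgroup (r s : nat) (G : isoset r s) : Prop :=
  (forall f, G f -> is_isometry r s f) /\
  G (fun x => x) /\
  (forall f g, G f -> G g -> G (fun x => f (g x))) /\
  (forall f, G f -> exists g, G g /\ (forall x, f (g x) = x) /\ (forall x, g (f x) = x)).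

Definition iso_centralizer (r s : nat) (G : isoset r s) : isoset r s :=
  fun g => is_isometry r s g /\ forall f, G f -> forall x, g (f x) = f (g x).

Definition iso_center (r s : nat) (G : isoset r s) : isoset r s :=
  fun g => G g /\ forall f, G f -> forall x, g (f x) = f (g x).

Definition iso_orbit (r s : nat) (H : isoset r s) (x0 : rvec (r + s)) : rvec (r + s) -> Prop :=
  fun y => exists g, H g /\ y = g x0.

Definition is_open_set (n : nat) (S : rvec n -> Prop) : Prop :=
  forall y, S y -> exists eps : R, (0 < eps) /\
    forall z, (\big[Rplus/0]_(i < n) ((z i - y i) * (z i - y i))) < (eps * eps) -> S z.

(* U_Lambda = sum of the subspaces im A, (I+A,v) in Lambda: the set of finite
   sums of vectors in these images *)
Inductive inU (r s : nat) (L : isoset r s) : rvec (r + s) -> Prop :=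
  | inU0 : inU r s L (vzero (r + s))
  | inUstep u f x : inU r s L u -> L f -> inU r s L (vadd (r + s) u (Apart r s f x)).

Definition form_perp (r s : nat) (U V : rvec (r + s) -> Prop) : Prop :=
  forall u v, U u -> V v -> form r s u v = 0.

(* Main.v *)
Require Import Defs.
From HB Require Import structures.
From Stdlib Require Import Reals Lra FunctionalExtensionality.
From mathcomp Require Import all_boot.
Local Open Scope R_scope.

HB.instance Definition _ := Monoid.isComLaw.Build R 0 Rplus (fun a b c => esym (Rplus_assoc a b c)) Rplus_comm Rplus_0_l.

Section L.
Variable n : nat.
Notation V := (rvec n).

Lemma sumD (F G : 'I_n -> R) :
  \big[Rplus/0]_(i < n) (F i + G i) = \big[Rplus/0]_(i < n) F i + \big[Rplus/0]_(i < n) G i.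
Proof. by rewrite big_split. Qed.

Lemma sumZ (a : R) (F : 'I_n -> R) :
  \big[Rplus/0]_(i < n) (a * F i) = a * \big[Rplus/0]_(i < n) F i.
Proof.
rewrite (big_morph (fun x => a * x) (id1 := 0) (op1 := Rplus)) //.
- by move=> x y /=; rewrite Rmult_plus_distr_l.
- by rewrite Rmult_0_r.
Qed.

Lemma sum0 : \big[Rplus/0]_(i < n) (0:R) = 0.
Proof. by rewrite big1. Qed.

Lemma sum_delta (F : 'I_n -> R) (i : 'I_n) :
  \big[Rplus/0]_(j < n) (if j == i then F j else 0) = F i.
Proof. by rewrite -big_mkcond big_pred1_eq. Qed.

Lemma sum_ext (F G : 'I_n -> R) : (forall i, F i = G i) ->
  \big[Rplus/0]_(i < n) F i = \big[Rplus/0]_(i < n) G i.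
Proof. by move=> H; apply: eq_bigr => i _. Qed.

Lemma sum_nonneg (F : 'I_n -> R) : (forall i, 0 <= F i) -> 0 <= \big[Rplus/0]_(i < n) F i.
Proof. move=> H; apply: (big_ind (fun x => 0 <= x)) => //; [lra| move=> x y; lra]. Qed.
End L.

Definition scal {m : nat} (a : R) (x : rvec m) : rvec m := fun i => a * x i.

Section F.
Variables r s : nat.
Notation n := (r + s)%N.
Notation V := (rvec n).

Lemma form_sym x y : form r s x y = form r s y x.
Proof. apply: sum_ext => i; ring. Qed.

Lemma form_addl x y z : form r s (vadd n x y) z = form r s x z + form r s y z.
Proof. rewrite /form -sumD; apply: sum_ext => i; rewrite /vadd; ring. Qed.
Lemma form_addr x y z : form r s z (vadd n x y) = form r s z x + form r s z y.
Proof. by rewrite form_sym form_addl !(form_sym z). Qed.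
Lemma form_subl x y z : form r s (vsub n x y) z = form r s x z - form r s y z.
Proof.
have -> : form r s x z - form r s y z = form r s x z + (-1) * form r s y z by ring.
rewrite /form -sumZ -sumD; apply: sum_ext => i; rewrite /vsub; ring. Qed.
Lemma form_subr x y z : form r s z (vsub n x y) = form r s z x - form r s z y.
Proof. by rewrite form_sym form_subl !(form_sym z). Qed.
Lemma form_scall a x z : form r s (scal a x) z = a * form r s x z.
Proof. rewrite /form -sumZ; apply: sum_ext => i; rewrite /scal; ring. Qed.
Lemma form_scalr a x z : form r s z (scal a x) = a * form r s z x.
Proof. by rewrite form_sym form_scall form_sym. Qed.
Lemma form_0l z : form r s (vzero n) z = 0.
Proof. rewrite /form -{2}(sum0 n); apply: sum_ext => i; rewrite /vzero; ring. Qed.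
Lemma form_0r z : form r s z (vzero n) = 0.
Proof. by rewrite form_sym form_0l. Qed.

Lemma nondeg y : (forall x, form r s x y = 0) -> y = vzero n.
Proof.
move=> H; apply: functional_extensionality => i.
have := H (fun j => if j == i then 1 else 0).
rewrite /form (@sum_ext _ _ (fun j => if j == i then sgn r j * y j else 0)).
  rewrite sum_delta /vzero => E.
  have : sgn r i <> 0 by rewrite /sgn; case: (i < r)%N; lra.
  move=> Hs; apply: (Rmult_eq_reg_l (sgn r i)) => //; lra.
by move=> j; case: (j == i); ring.
Qed.

Lemma mulmv_add M x y : mulmv n M (vadd n x y) = vadd n (mulmv n M x) (mulmv n M y).
Proof. apply: functional_extensionality => i; rewrite /mulmv /vadd -sumD.
apply: sum_ext => j; ring. Qed.
Lemma mulmv_scal M a x : mulmv n M (scal a x) = scal a (mulmv n M x).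
Proof. apply: functional_extensionality => i; rewrite /mulmv /scal -sumZ.
apply: sum_ext => j; ring. Qed.
Lemma mulmv_0 M : mulmv n M (vzero n) = vzero n.
Proof. apply: functional_extensionality => i; rewrite /mulmv /vzero; rewrite [RHS](esym (sum0 n)).
apply: sum_ext => j; ring. Qed.
Lemma mulmv_id x : mulmv n (fun i j => if j == i then 1 else 0) x = x.
Proof. apply: functional_extensionality => i; rewrite /mulmv.
rewrite (@sum_ext _ _ (fun j => if j == i then x j else 0)) ?sum_delta //.
by move=> j; case: (j == i); ring. Qed.

Definition aff (f L : V -> V) :=
  (forall x y, L (vadd n x y) = vadd n (L x) (L y)) /\
  (forall a x, L (scal a x) = scal a (L x)) /\
  (forall x y, form r s (L x) (L y) = form r s x y) /\
  (forall x, f x = vadd n (L x) (f (vzero n))).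

Lemma iso_aff f : is_isometry r s f -> exists L, aff f L.
Proof.
move=> [M [v [Hf Hx]]]; exists (mulmv n M); split; [|split; [|split]].
- exact: mulmv_add.
- exact: mulmv_scal.
- exact: Hf.
- move=> x; rewrite !Hx mulmv_0; apply: functional_extensionality => i.
  rewrite /vadd /vzero; ring.
Qed.

Lemma id_iso : is_isometry r s (fun x => x).
Proof.
exists (fun i j => if j == i then 1 else 0), (vzero n); split.
- by move=> x y; rewrite !mulmv_id.
- move=> x; rewrite mulmv_id; apply: functional_extensionality => i; rewrite /vadd /vzero; ring.
Qed.
End F.

Section M.
Variables r s : nat.
Notation n := (r + s)%N.
Notation V := (rvec n).
Notation form := (form r s).

Lemma L0 f L : aff r s f L -> L (vzero n) = vzero n.
Proof.
move=> [_ [HZ _]].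
have -> : vzero n = scal 0 (vzero n) by apply: functional_extensionality => i; rewrite /scal /vzero; ring.
rewrite HZ; apply: functional_extensionality => i; rewrite /scal /vzero; ring.
Qed.

Lemma Lsub f L x y : aff r s f L -> L (vsub n x y) = vsub n (L x) (L y).
Proof.
move=> H; have [HA [HZ _]] := H.
have -> : vsub n x y = vadd n x (scal (-1) y) by apply: functional_extensionality => i; rewrite /vsub /vadd /scal; ring.
rewrite HA HZ; apply: functional_extensionality => i; rewrite /vsub /vadd /scal; ring.
Qed.

Lemma Apart_eq f L x : aff r s f L -> Apart r s f x = vsub n (L x) x.
Proof.
move=> [_ [_ [_ Hf]]]; apply: functional_extensionality => i.
rewrite /Apart /vsub Hf /vadd; ring.
Qed.

Arguments Apart_eq {f L} x.

Lemma Apart_add f L x y : aff r s f L ->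
  Apart r s f (vadd n x y) = vadd n (Apart r s f x) (Apart r s f y).
Proof.
move=> H; rewrite !(Apart_eq _ H); have [HA _] := H; rewrite HA.
apply: functional_extensionality => i; rewrite /vsub /vadd; ring.
Qed.

Lemma Apart_scal f L a x : aff r s f L ->
  Apart r s f (scal a x) = scal a (Apart r s f x).
Proof.
move=> H; rewrite !(Apart_eq _ H); have [_ [HZ _]] := H; rewrite HZ.
apply: functional_extensionality => i; rewrite /vsub /scal; ring.
Qed.

Lemma disp_line f L x0 z t : aff r s f L ->
  vsub n (f (vadd n x0 (scal t z))) (vadd n x0 (scal t z)) =
  vadd n (vsub n (f x0) x0) (scal t (Apart r s f z)).
Proof.
move=> H; rewrite (Apart_eq _ H); have [HA [HZ [_ Hf]]] := H.
rewrite Hf (Hf x0) HA HZ; apply: functional_extensionality => i.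
rewrite /vsub /vadd /scal; ring.
Qed.

Arguments disp_line {f L} x0 z t.

Lemma quad_lemma f Lf h Lh x0 eps :
  aff r s f Lf -> aff r s h Lh -> 0 < eps ->
  (forall y, \big[Rplus/0]_(i < n) ((y i - x0 i) * (y i - x0 i)) < eps * eps ->
     form (vsub n (f y) y) (vsub n (h y) y) = form (vsub n (f x0) x0) (vsub n (h x0) x0)) ->
  forall z, form (Apart r s f z) (Apart r s h z) = 0.
Proof.
move=> Hf Hh Heps Hb z.
set N := \big[Rplus/0]_(i < n) (z i * z i).
have HN : 0 <= N by apply: sum_nonneg => i; nra.
set t := eps / (N + 1).
have Ht : 0 < t by apply: Rdiv_lt_0_compat; lra.
have Ht' : t * (N + 1) = eps by rewrite /t; field; lra.
have key : forall u, u * u = t * t ->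
   form (vsub n (f x0) x0) (vsub n (h x0) x0) +
   u * (form (vsub n (f x0) x0) (Apart r s h z) + form (Apart r s f z) (vsub n (h x0) x0)) +
   u * u * form (Apart r s f z) (Apart r s h z) =
   form (vsub n (f x0) x0) (vsub n (h x0) x0).
  move=> u Hu; rewrite -[RHS](Hb (vadd n x0 (scal u z))).
    rewrite (disp_line _ _ _ Hf) (disp_line _ _ _ Hh).
    move: (vsub n (f x0) x0) (vsub n (h x0) x0) (Apart r s f z) (Apart r s h z) => P Q p q.
    rewrite !form_addl !form_addr !form_scall !form_scalr; ring.
  have -> : \big[Rplus/0]_(i < n) ((vadd n x0 (scal u z) i - x0 i) * (vadd n x0 (scal u z) i - x0 i))
     = \big[Rplus/0]_(i < n) (u * u * (z i * z i)).
    by apply: sum_ext => i; rewrite /vadd /scal; ring.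
  rewrite sumZ -/N Hu; nra.
have k1 := key t erefl.
have k2 := key (- t) ltac:(ring).
have : 2 * (t * t) * form (Apart r s f z) (Apart r s h z) = 0 by nra.
move=> E; case: (Rmult_integral _ _ E) => //; nra.
Qed.
End M.

Arguments iso_aff {r s f}. Arguments L0 {r s f L}. Arguments Lsub {r s f L} x y.
Arguments Apart_eq {r s f L} x. Arguments Apart_add {r s f L} x y.
Arguments quad_lemma {r s f Lf h Lh x0 eps}. Arguments id_iso {r s}.

Section Main.
Variables r s : nat.
Notation n := (r + s)%N.
Notation V := (rvec n).
Notation form := (form r s).
Variable Gamma : isoset r s.
Hypothesis HG : is_subgroup r s Gamma.
Variable x0 : V.
Hypothesis Hop : is_open_set n (iso_orbit r s (iso_centralizer r s Gamma) x0).

Lemma cross f h : Gamma f -> Gamma h -> forall z, form (Apart r s f z) (Apart r s h z) = 0.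
Proof.
move=> Gf Gh.
have [Hiso _] := HG.
have [Lf Hf] := iso_aff (Hiso f Gf).
have [Lh Hh] := iso_aff (Hiso h Gh).
have Hx0 : iso_orbit r s (iso_centralizer r s Gamma) x0 x0.
  by exists (fun x => x); split=> //; split; [exact: id_iso | by []].
have [eps [Heps Hb]] := Hop x0 Hx0.
apply: (quad_lemma Hf Hh Heps) => y /Hb [g [[Giso Gc] ->]].
have [Lg Hg] := iso_aff Giso.
have E : forall k, Gamma k -> vsub n (k (g x0)) (g x0) = Lg (vsub n (k x0) x0).
  move=> k Gk; rewrite -(Gc k Gk) (Lsub _ _ Hg).
  have [_ [_ [_ Hgg]]] := Hg.
  rewrite (Hgg (k x0)) (Hgg x0); apply: functional_extensionality => i.
  rewrite /vsub /vadd; ring.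
rewrite (E f Gf) (E h Gh); have [_ [_ [HF _]]] := Hg; exact: HF.
Qed.

Arguments cross {f h}.

Lemma selfperp f : Gamma f -> forall x y, form (Apart r s f x) (Apart r s f y) = 0.
Proof.
move=> Gf x y.
have [Hiso _] := HG; have [Lf Hf] := iso_aff (Hiso f Gf).
have := cross Gf Gf (vadd n x y).
rewrite (Apart_add _ _ Hf).
have := cross Gf Gf x; have := cross Gf Gf y.
move: (Apart r s f x) (Apart r s f y) => a b.
rewrite !form_addl !form_addr (form_sym _ _ b a); lra.
Qed.

Arguments selfperp {f}.

Lemma skew f : Gamma f -> forall x y, form (Apart r s f x) y = - form x (Apart r s f y).
Proof.
move=> Gf x y.
have [Hiso _] := HG; have [Lf Hf] := iso_aff (Hiso f Gf).
have [_ [_ [HF _]]] := Hf.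
have E : forall w, Lf w = vadd n (Apart r s f w) w.
  move=> w; rewrite (Apart_eq _ Hf); apply: functional_extensionality => i.
  rewrite /vsub /vadd; ring.
have := HF x y; rewrite !E; have := selfperp Gf x y.
move: (Apart r s f x) (Apart r s f y) => a b.
rewrite !form_addl !form_addr; lra.
Qed.

Arguments skew {f}.

Lemma polar f h : Gamma f -> Gamma h -> forall x y,
  form (Apart r s f x) (Apart r s h y) + form (Apart r s f y) (Apart r s h x) = 0.
Proof.
move=> Gf Gh x y.
have [Hiso _] := HG; have [Lf Hf] := iso_aff (Hiso f Gf); have [Lh Hh] := iso_aff (Hiso h Gh).
have := cross Gf Gh (vadd n x y).
rewrite (Apart_add _ _ Hf) (Apart_add _ _ Hh).
have := cross Gf Gh x; have := cross Gf Gh y.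
move: (Apart r s f x) (Apart r s f y) (Apart r s h x) (Apart r s h y) => a b c e.
rewrite !form_addl !form_addr; lra.
Qed.

Arguments polar {f h}.

Lemma commA d g : Gamma d -> Gamma g -> (forall x, d (g x) = g (d x)) ->
  forall x, Apart r s d (Apart r s g x) = Apart r s g (Apart r s d x).
Proof.
move=> Gd Gg C x.
have [Hiso _] := HG; have [Ld Hd] := iso_aff (Hiso d Gd); have [Lg Hg] := iso_aff (Hiso g Gg).
have [HAd [_ [_ Fd]]] := Hd; have [HAg [_ [_ Fg]]] := Hg.
have e1 : d (g x) = vadd n (vadd n (Ld (Lg x)) (Ld (g (vzero n)))) (d (vzero n)).
  by rewrite {1}Fd {1}Fg HAd.
have e2 : g (d x) = vadd n (vadd n (Lg (Ld x)) (Lg (d (vzero n)))) (g (vzero n)).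
  by rewrite {1}Fg {1}Fd HAg.
have e3 := Fd (g (vzero n)); have e4 := Fg (d (vzero n)).
have C0 := C (vzero n); have Cx := C x.
rewrite e1 e2 in Cx; rewrite e3 e4 in C0.
rewrite !(Apart_eq _ Hd) !(Apart_eq _ Hg) !(Lsub _ _ Hd) !(Lsub _ _ Hg).
apply: functional_extensionality => i.
have := f_equal (fun v => v i) C0; have := f_equal (fun v => v i) Cx.
rewrite /vsub /vadd /vzero /=; lra.
Qed.

Arguments commA {d g}.

Lemma key d g : iso_center r s Gamma d -> Gamma g ->
  forall x y, form (Apart r s d x) (Apart r s g y) = 0.
Proof.
move=> [Gd Cd] Gg x y.
have C : forall x, d (g x) = g (d x) by exact: Cd.
have E : Apart r s g (Apart r s d x) = vzero n.
  apply: nondeg => w.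
  have h1 := polar Gg Gd x w.
  have s1 := skew Gg w (Apart r s d x).
  have s2 := skew Gd w (Apart r s g x).
  have s3 := form_sym r s (Apart r s g x) (Apart r s d w).
  rewrite (commA Gd Gg C) in s2; lra.
have s4 := skew Gg y (Apart r s d x).
rewrite E form_0r in s4; rewrite form_sym; lra.
Qed.
End Main.

Theorem lemma4p1 (r s : nat) (Gamma : isoset r s) :
  is_subgroup r s Gamma ->
  (exists x0 : rvec (r + s), is_open_set (r + s) (iso_orbit r s (iso_centralizer r s Gamma) x0)) ->
  form_perp r s (inU r s (iso_center r s Gamma)) (inU r s Gamma).
Proof.
move=> HG [x0 Hop] u v Hu Hv.
elim: Hu => [|u' d x _ IH Hd]; first exact: form_0l.
rewrite form_addl IH.
suff -> : form r s (Apart r s d x) v = 0 by ring.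
elim: Hv => [|v' g y _ IH2 Hg]; first exact: form_0r.
rewrite form_addr IH2 (@key r s Gamma HG x0 Hop _ _ Hd Hg x y); ring.
Qed.
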